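(* Let $R$ be a (not necessarily commutative) local ring with maximal ideal $\mathfrak{m}$, separated and complete for the $\mathfrak{m}$-adic topology, $\sigma:R\to R$ a ring automorphism with $\sigma(\mathfrak{m})=\mathfrak{m}$, and $\delta$ a $\sigma$-derivation with $\delta(R)\subseteq\mathfrak{m}$, $\delta(\mathfrak{m})\subseteq\mathfrak{m}^2$. Let $A=R[[X;\sigma,\delta]]$ and let $f\in A$ have finite reduced order. Then $f$ can be expressed uniquely as $f=\epsilon F$ with $\epsilon$ a unit of $A$ and $F$ a distinguished polynomial.
   Context: A $\sigma$-derivation is an additive map with $\delta(rs)=\delta(r)s+\sigma(r)\delta(s)$. $R[[X;\sigma,\delta]]$ consists of formal series $\sum r_nX^n$ with multiplication determined by $Xr=\sigma(r)X+\delta(r)$; it contains the skew polynomial ring $R[X;\sigma,\delta]$. For $f=\sum a_iX^i$, $\mathrm{ord}^{red}(f)=\min\{i:a_i\in R^\times\}$. A distinguished (Weierstrass) polynomial is a monic polynomial $X^s+a_{s-1}X^{s-1}+\dots+a_1X+a_0\in R[X;\sigma,\delta]$ with all $a_i\in\mathfrak{m}$. *)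

(* Defs.v *)
From HB Require Import structures.
From mathcomp Require Import all_boot all_order all_algebra.
Set Implicit Arguments. Unset Strict Implicit. Unset Printing Implicit Defensive.
Import Order.TTheory GRing.Theory.
Local Open Scope ring_scope.

Section SkewSeries.
Variable R : unitRingType.

(* The maximal ideal of a local ring: the set of (two-sided) non-units. *)
Definition in_m (x : R) : Prop := x \notin GRing.unit.

Definition local_ring : Prop :=
  in_m 0 /\
  (forall x y, in_m x -> in_m y -> in_m (x + y)) /\
  (forall x, in_m x -> in_m (- x)) /\
  (forall r x, in_m x -> in_m (r * x) /\ in_m (x * r)).

Inductive mpow : nat -> R -> Prop :=
| mpow0 x : mpow 0 x
| mpow_zero n : mpow n.+1 0
| mpow_mul n a b : in_m a -> mpow n b -> mpow n.+1 (a * b)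
| mpow_add n x y : mpow n.+1 x -> mpow n.+1 y -> mpow n.+1 (x + y).

Definition madic_lim (u : nat -> R) (l : R) : Prop :=
  forall k, exists N, forall i, (N <= i)%N -> mpow k (u i - l).

Definition madic_separated : Prop :=
  forall x, (forall n, mpow n x) -> x = 0.

Definition madic_complete : Prop :=
  forall u : nat -> R,
    (forall k, exists N, forall i j, (N <= i)%N -> (N <= j)%N -> mpow k (u i - u j)) ->
    exists l, madic_lim u l.

Definition sigma_derivation (s d : R -> R) : Prop :=
  (forall x y, d (x + y) = d x + d y) /\
  (forall r x, d (r * x) = d r * x + s r * d x).

(* Coefficients of X^i b = \sum_k xc i k b X^k, using X r = s(r) X + d(r). *)
Fixpoint xc (s d : R -> R) (i k : nat) (b : R) : R :=
  match i with
  | 0 => if k == 0%N then b else 0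
  | i'.+1 => (if k is k'.+1 then s (xc s d i' k' b) else 0) + d (xc s d i' k b)
  end.

Definition series := nat -> R.

Definition one_series : series := fun n => if n == 0%N then 1 else 0.

Definition mul_partial (s d : R -> R) (f g : series) (n N : nat) : R :=
  \sum_(i < N) \sum_(j < n.+1) f i * xc s d i (n - j) (g j).

Definition series_mul_eq (s d : R -> R) (f g h : series) : Prop :=
  forall n, madic_lim (mul_partial s d f g n) (h n).

Definition series_unit (s d : R -> R) (e : series) : Prop :=
  exists e', series_mul_eq s d e e' one_series /\ series_mul_eq s d e' e one_series.

Definition finite_red_ord (f : series) : Prop :=
  exists i, f i \in GRing.unit.

Definition distinguished (F : series) : Prop :=
  exists s : nat, F s = 1 /\ (forall i, (i < s)%N -> in_m (F i)) /\
                  (forall i, (s < i)%N -> F i = 0).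

End SkewSeries.

(* Main.v *)
Require Import Defs.
From HB Require Import structures.
From mathcomp Require Import all_boot all_order all_algebra.
From mathcomp Require Import zify ring.
From Stdlib Require Import ClassicalEpsilon FunctionalExtensionality.
Set Implicit Arguments. Unset Strict Implicit. Unset Printing Implicit Defensive.
Import GRing.Theory.
Local Open Scope ring_scope.

Section Main.
Variable R : unitRingType.
Hypothesis Hloc : local_ring R.
Hypothesis Hsep : madic_separated R.
Hypothesis Hcomp : madic_complete R.

Lemma inm0 : in_m (0 : R). Proof. by case: Hloc. Qed.
Lemma inmD (x y : R) : in_m x -> in_m y -> in_m (x + y).
Proof. by case: Hloc => _ [H _]; apply: H. Qed.
Lemma inmN (x : R) : in_m x -> in_m (- x).
Proof. by case: Hloc => _ [_ [H _]]; apply: H. Qed.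
Lemma inmMl (r x : R) : in_m x -> in_m (r * x).
Proof. by case: Hloc => _ [_ [_ H]] Hx; case: (H r x Hx). Qed.
Lemma inmMr (r x : R) : in_m x -> in_m (x * r).
Proof. by case: Hloc => _ [_ [_ H]] Hx; case: (H r x Hx). Qed.
Lemma notm_unit (x : R) : ~ in_m x -> x \is a GRing.unit.
Proof. by rewrite /in_m => H; apply/negPn/negP. Qed.
Lemma unit_notm (x : R) : x \is a GRing.unit -> ~ in_m x.
Proof. by rewrite /in_m => H /negP. Qed.
Lemma unit_addm (a x : R) : a \is a GRing.unit -> in_m x -> (a + x) \is a GRing.unit.
Proof.
move=> Ha Hx; apply: notm_unit => H; apply: (unit_notm Ha).
by have := inmD H (inmN Hx); rewrite addrK.
Qed.
Lemma one_notm : ~ in_m (1 : R).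
Proof. by apply: unit_notm; exact: unitr1. Qed.

Lemma mpow_add k (x y : R) : mpow k x -> mpow k y -> mpow k (x + y).
Proof. by case: k => [|k] Hx Hy; [apply: mpow0 | apply: mpow_add]. Qed.
Lemma mpow_0 k : mpow k (0 : R).
Proof. by case: k => [|k]; [apply: mpow0 | apply: mpow_zero]. Qed.
Lemma mpow_mull k (r x : R) : mpow k x -> mpow k (r * x).
Proof.
elim=> {k x} [x|n|n a b Ha Hb IH|n x y _ IHx _ IHy].
- exact: mpow0.
- by rewrite mulr0; apply: mpow_zero.
- by rewrite mulrA; apply: mpow_mul => //; apply: inmMl.
- by rewrite mulrDr; apply: mpow_add.
Qed.
Lemma mpow_mulr k (x r : R) : mpow k x -> mpow k (x * r).
Proof.
elim=> {k x} [x|n|n a b Ha Hb IH|n x y _ IHx _ IHy].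
- exact: mpow0.
- by rewrite mul0r; apply: mpow_zero.
- by rewrite -mulrA; apply: mpow_mul.
- by rewrite mulrDl; apply: mpow_add.
Qed.
Lemma mpow_opp k (x : R) : mpow k x -> mpow k (- x).
Proof. by move=> H; rewrite -mulN1r; apply: mpow_mull. Qed.
Lemma mpow_sub k (x y : R) : mpow k x -> mpow k y -> mpow k (x - y).
Proof. by move=> Hx Hy; apply: mpow_add => //; apply: mpow_opp. Qed.
Lemma mpowM a b (x y : R) : mpow a x -> mpow b y -> mpow (a + b) (x * y).
Proof.
move=> Hx Hy; elim: Hx => {a x} [x|n|n a c Ha Hc IH|n x z _ IHx _ IHz].
- by rewrite add0n; apply: mpow_mull.
- by rewrite mul0r; apply: mpow_0.
- by rewrite -mulrA addSn; apply: mpow_mul.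
- by rewrite mulrDl; apply: mpow_add.
Qed.
Lemma mpow_le j k (x : R) : (j <= k)%N -> mpow k x -> mpow j x.
Proof.
move=> Hjk Hx; elim: Hx j Hjk => {k x} [x|n|n a c Ha Hc IH|n x z _ IHx _ IHz] j Hj.
- by case: j Hj => // _; apply: mpow0.
- exact: mpow_0.
- case: j Hj => [|j] Hj; first exact: mpow0.
  by apply: mpow_mul => //; apply: IH.
- by apply: mpow_add; [apply: IHx | apply: IHz].
Qed.
Lemma mpow1 (x : R) : mpow 1 x <-> in_m x.
Proof.
split.
- have H : forall k, mpow k x -> (0 < k)%N -> in_m x.
    move=> k Hk; elim: Hk => {k x} [x|n|n a c Ha Hc IH|n x z _ IHx _ IHz] //.
    + by move=> _; apply: inm0.
    + by move=> _; apply: inmMr.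
    + by move=> _; apply: inmD; [apply: IHx|apply: IHz].
  by move=> Hx; apply: (H 1%N).
- by move=> Hx; rewrite -(mulr1 x); apply: mpow_mul; last exact: mpow0.
Qed.
Lemma mpow_sum k (I : finType) (F : I -> R) :
  (forall i, mpow k (F i)) -> mpow k (\sum_i F i).
Proof.
move=> H; apply: (big_ind (mpow k)); [exact: mpow_0| exact: mpow_add|by []].
Qed.


Lemma mpow_all0 (x : R) : (forall k, mpow k x) -> x = 0.
Proof. exact: Hsep. Qed.

Lemma lim_unique (u : nat -> R) l l' : madic_lim u l -> madic_lim u l' -> l = l'.
Proof.
move=> H H'; apply/eqP; rewrite -subr_eq0; apply/eqP/Hsep => k.
case: (H k) => N HN; case: (H' k) => N' HN'.
have -> : l - l' = (u (maxn N N') - l') - (u (maxn N N') - l) by rewrite opprB [RHS]addrC subrKA.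
by apply: mpow_sub => //; [apply: HN'|apply: HN]; rewrite ?leq_maxl ?leq_maxr.
Qed.

Lemma lim_add (u v : nat -> R) l l' : madic_lim u l -> madic_lim v l' ->
  madic_lim (fun i => u i + v i) (l + l').
Proof.
move=> H H' k; case: (H k) => N HN; case: (H' k) => N' HN'.
exists (maxn N N') => i Hi.
have -> : u i + v i - (l + l') = (u i - l) + (v i - l') by rewrite opprD addrACA.
by apply: mpow_add => //; [apply: HN|apply: HN']; apply: leq_trans Hi; rewrite ?leq_maxl ?leq_maxr.
Qed.

Lemma lim_map (g : R -> R) (u : nat -> R) l :
  (forall x y, g (x - y) = g x - g y) -> (forall k x, mpow k x -> mpow k (g x)) ->
  madic_lim u l -> madic_lim (fun i => g (u i)) (g l).
Proof.
move=> gB gk H k; case: (H k) => N HN; exists N => i Hi.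
by rewrite -gB; apply: gk; apply: HN.
Qed.

Lemma lim_opp (u : nat -> R) l : madic_lim u l -> madic_lim (fun i => - u i) (- l).
Proof.
by apply: (lim_map (g := fun x => - x)) => [x y|k x]; [rewrite opprB opprK addrC| apply: mpow_opp].
Qed.

Lemma lim_sub (u v : nat -> R) l l' : madic_lim u l -> madic_lim v l' ->
  madic_lim (fun i => u i - v i) (l - l').
Proof. by move=> H H'; apply: lim_add => //; apply: lim_opp. Qed.

Lemma lim_const (c : R) : madic_lim (fun _ => c) c.
Proof. by move=> k; exists 0%N => i _; rewrite subrr; apply: mpow_0. Qed.

Lemma lim_mull (c : R) (u : nat -> R) l : madic_lim u l -> madic_lim (fun i => c * u i) (c * l).
Proof. by apply: (lim_map (g := fun x => c * x)) => [x y|k x]; [rewrite mulrBr|apply: mpow_mull]. Qed.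

Lemma lim_mulr (c : R) (u : nat -> R) l : madic_lim u l -> madic_lim (fun i => u i * c) (l * c).
Proof. by apply: (lim_map (g := fun x => x * c)) => [x y|k x]; [rewrite mulrBl|apply: mpow_mulr]. Qed.

Lemma lim_vanish (u v : nat -> R) l : madic_lim u l ->
  (forall k, exists N, forall i, (N <= i)%N -> mpow k (v i - u i)) -> madic_lim v l.
Proof.
move=> H H' k; case: (H k) => N HN; case: (H' k) => N' HN'.
exists (maxn N N') => i Hi.
have -> : v i - l = (v i - u i) + (u i - l) by rewrite subrKA.
by apply: mpow_add => //; [apply: HN'|apply: HN]; apply: leq_trans Hi; rewrite ?leq_maxl ?leq_maxr.
Qed.

Lemma lim_ev (u v : nat -> R) l : madic_lim u l ->
  (exists N, forall i, (N <= i)%N -> v i = u i) -> madic_lim v l.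
Proof.
move=> H [N HN]; apply: (lim_vanish H) => k; exists N => i Hi.
by rewrite HN // subrr; apply: mpow_0.
Qed.

Lemma lim_shift (u : nat -> R) l : madic_lim u l -> madic_lim (fun i => u i.+1) l.
Proof. by move=> H k; case: (H k) => N HN; exists N => i Hi; apply: HN; apply: leqW. Qed.

Lemma lim_unshift (u : nat -> R) l : madic_lim (fun i => u i.+1) l -> madic_lim u l.
Proof. by move=> H k; case: (H k) => N HN; exists N.+1 => [[|i]] // Hi; apply: HN. Qed.

Lemma lim_closed (u : nat -> R) l k : madic_lim u l ->
  (exists N, forall i, (N <= i)%N -> mpow k (u i)) -> mpow k l.
Proof.
move=> H [N HN]; case: (H k) => N' HN'.
have -> : l = u (maxn N N') - (u (maxn N N') - l) by rewrite opprB subrKC.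
by apply: mpow_sub; [apply: HN|apply: HN']; rewrite ?leq_maxl ?leq_maxr.
Qed.

Lemma psum_diff (a : nat -> R) i j : (i <= j)%N ->
  \sum_(t < j) a t - \sum_(t < i) a t = \sum_(i <= t < j) a t.
Proof.
move=> Hij; rewrite -!(big_mkord xpredT) (big_cat_nat (leq0n i) Hij) /=.
by rewrite [_ + _ - _]addrC addKr.
Qed.

Lemma mpow_sum_nat k (a : nat -> R) i j :
  (forall t, (i <= t)%N -> mpow k (a t)) -> mpow k (\sum_(i <= t < j) a t).
Proof.
move=> H; rewrite big_nat_cond; apply: (big_ind (mpow k)); [exact: mpow_0| exact: mpow_add|].
by move=> t /andP[/andP[Ht _] _]; apply: H.
Qed.

Lemma psum_tail (a : nat -> R) l N k : madic_lim (fun M => \sum_(t < M) a t) l ->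
  (forall t, (N <= t)%N -> mpow k (a t)) -> mpow k (l - \sum_(t < N) a t).
Proof.
move=> H Ha; apply: (lim_closed (lim_sub H (lim_const (\sum_(t < N) a t)))).
by exists N => i Hi; rewrite psum_diff //; apply: mpow_sum_nat.
Qed.


Lemma psum_lim (a : nat -> R) c : (forall t, mpow (t - c) (a t)) ->
  exists l, madic_lim (fun M => \sum_(t < M) a t) l.
Proof.
move=> Ha; apply: Hcomp => k; exists (k + c)%N => i j Hi Hj.
have key : forall i j, (k + c <= i)%N -> (i <= j)%N -> mpow k (\sum_(t < j) a t - \sum_(t < i) a t).
  move=> i' j' Hi' Hij; rewrite psum_diff //; apply: mpow_sum_nat => t Ht.
  by apply: (mpow_le _ (Ha t)); lia.
case: (leqP i j) => Hij.
- by rewrite -opprB; apply: mpow_opp; apply: key.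
- by apply: key => //; apply: ltnW.
Qed.

Variable sigma : {rmorphism R -> R}.
Variable delta : R -> R.
Hypothesis Hsig_m : forall x, in_m x -> in_m (sigma x).
Hypothesis Hdelta : sigma_derivation sigma delta.
Hypothesis Hdelta_R : forall x, in_m (delta x).
Hypothesis Hdelta_m : forall x, in_m x -> mpow 2 (delta x).

Lemma deltaD x y : delta (x + y) = delta x + delta y.
Proof. by case: Hdelta. Qed.
Lemma deltaM x y : delta (x * y) = delta x * y + sigma x * delta y.
Proof. by case: Hdelta. Qed.
Lemma delta0 : delta 0 = 0.
Proof. by apply/eqP; rewrite -(addrK (delta 0) (delta 0)) -deltaD addr0 subrr. Qed.
Lemma deltaN x : delta (- x) = - delta x.
Proof. by apply/eqP; rewrite -subr_eq0 opprK -deltaD addNr delta0. Qed.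
Lemma deltaB x y : delta (x - y) = delta x - delta y.
Proof. by rewrite deltaD deltaN. Qed.
Lemma delta_sum (I : Type) (r : seq I) (P : pred I) (F : I -> R) :
  delta (\sum_(i <- r | P i) F i) = \sum_(i <- r | P i) delta (F i).
Proof. exact: (big_morph delta deltaD delta0). Qed.
Lemma delta1 : delta 1 = 0.
Proof.
have := deltaM 1 1; rewrite !mulr1 rmorph1 mul1r => H.
have : delta 1 + delta 1 - delta 1 = delta 1 - delta 1 by rewrite -H.
by rewrite addrK subrr.
Qed.

Lemma mpow_sigma k x : mpow k x -> mpow k (sigma x).
Proof.
elim=> {k x} [x|n|n a b Ha Hb IH|n x y _ IHx _ IHy].
- exact: mpow0.
- by rewrite rmorph0; apply: mpow_zero.
- by rewrite rmorphM; apply: mpow_mul => //; apply: Hsig_m.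
- by rewrite rmorphD; apply: mpow_add.
Qed.

Lemma mpow_delta k x : mpow k x -> mpow k.+1 (delta x).
Proof.
elim=> {k x} [x|n|n a b Ha Hb IH|n x y _ IHx _ IHy].
- by apply/mpow1; apply: Hdelta_R.
- by rewrite delta0; apply: mpow_zero.
- rewrite deltaM; apply: mpow_add.
  + exact: mpowM (Hdelta_m Ha) Hb.
  + by apply: mpow_mul => //; apply: Hsig_m.
- by rewrite deltaD; apply: mpow_add.
Qed.

Lemma mpow_deltaW k x : mpow k x -> mpow k (delta x).
Proof. by move=> H; apply: (mpow_le (leqnSn k)); apply: mpow_delta. Qed.

Definition Dop (g : series R) : series R :=
  fun n => (if n is n'.+1 then sigma (g n') else 0) + delta (g n).

Definition Diter i g := iter i Dop g.

Lemma Diter_xc i (g : series R) n :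
  Diter i g n = \sum_(j < n.+1) xc sigma delta i (n - j) (g j).
Proof.
elim: i n => [|i IH] n /=.
- rewrite big_ord_recr /= subnn eqxx big1 ?add0r // => j _.
  by rewrite subn_eq0 leqNgt ltn_ord.
- rewrite /Diter /= -/(Diter i g) /Dop big_split /=.
  rewrite IH delta_sum; congr (_ + _).
  case: n => [|n]; first by rewrite big_ord_recr big_ord0 /= add0r.
  rewrite big_ord_recr /= subnn addr0 IH rmorph_sum.
  apply: eq_bigr => j _; rewrite subSn //; exact: ltnSE (ltn_ord j).
Qed.

Lemma mul_partialE (f g : series R) n N :
  mul_partial sigma delta f g n N = \sum_(i < N) f i * Diter i g n.
Proof. by apply: eq_bigr => i _; rewrite Diter_xc mulr_sumr. Qed.

Definition Jf (a : nat) (g : series R) := forall n, mpow (a - n) (g n).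
Definition Mf (a : nat) (g : series R) := forall n, mpow a (g n).

Lemma Jf0 g : Jf 0 g.
Proof. by move=> n; apply: mpow0. Qed.
Lemma Mf0 g : Mf 0 g.
Proof. by move=> n; apply: mpow0. Qed.

Lemma Dop_J a g : Jf a g -> Jf a.+1 (Dop g).
Proof.
move=> H [|n]; rewrite /Dop.
- by rewrite add0r; apply: (mpow_le _ (mpow_delta (H 0))); lia.
- apply: mpow_add; first by apply: mpow_sigma; rewrite subSS; apply: H.
  by apply: (mpow_le _ (mpow_delta (H n.+1))); lia.
Qed.

Lemma Diter_J a i g : Jf a g -> Jf (a + i) (Diter i g).
Proof.
move=> H; elim: i => [|i IH]; first by rewrite addn0.
by rewrite addnS; apply: Dop_J.
Qed.

Lemma Dop_M a g : Mf a g -> Mf a (Dop g).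
Proof.
move=> H [|n]; rewrite /Dop.
- by rewrite add0r; apply: mpow_deltaW; apply: H.
- by apply: mpow_add; [apply: mpow_sigma|apply: mpow_deltaW]; apply: H.
Qed.

Lemma Diter_M a i g : Mf a g -> Mf a (Diter i g).
Proof. by move=> H; elim: i => [|i IH] //; apply: Dop_M. Qed.

Definition sadd (f g : series R) : series R := fun n => f n + g n.
Definition ssub (f g : series R) : series R := fun n => f n - g n.

Lemma Diter_add i f g n : Diter i (sadd f g) n = Diter i f n + Diter i g n.
Proof.
elim: i n => [|i IH] n //=.
rewrite /Diter /= -!/(Diter i _) /Dop IH; case: n => [|n].
- by rewrite !add0r deltaD.
- by rewrite IH rmorphD deltaD addrACA.
Qed.

Lemma Diter_sub i f g n : Diter i (ssub f g) n = Diter i f n - Diter i g n.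
Proof.
elim: i n => [|i IH] n //=.
rewrite /Diter /= -!/(Diter i _) /Dop IH; case: n => [|n].
- by rewrite !add0r deltaB.
- by rewrite IH rmorphB deltaB opprD addrACA.
Qed.

Lemma term_bound (f g : series R) n i : mpow (i - n) (f i * Diter i g n).
Proof. by apply: mpow_mull; apply: (Diter_J i (Jf0 g) n). Qed.

Lemma mul_ex (f g : series R) n :
  exists l, madic_lim (fun N => \sum_(i < N) f i * Diter i g n) l.
Proof. by apply: (psum_lim (a := fun i => f i * Diter i g n) (c := n)) => t; apply: term_bound. Qed.

Definition smul (f g : series R) : series R :=
  fun n => proj1_sig (constructive_indefinite_description _ (mul_ex f g n)).

Lemma smulP (f g : series R) n : madic_lim (fun N => \sum_(i < N) f i * Diter i g n) (smul f g n).
Proof. exact: (proj2_sig (constructive_indefinite_description _ (mul_ex f g n))). Qed.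

Lemma smul_eq (f g h : series R) : series_mul_eq sigma delta f g h <-> h = smul f g.
Proof.
have E : forall n, mul_partial sigma delta f g n = fun N => \sum_(i < N) f i * Diter i g n.
  by move=> n; apply: functional_extensionality => N; apply: mul_partialE.
split.
- move=> H; apply: functional_extensionality => n.
  by apply: (lim_unique (H n)); rewrite E; apply: smulP.
- by move=> -> n; rewrite E; apply: smulP.
Qed.

Lemma smul_ext (f g h : series R) : (forall n, madic_lim (fun N => \sum_(i < N) f i * Diter i g n) (h n)) ->
  smul f g = h.
Proof.
move=> H; apply: functional_extensionality => n.
exact: (lim_unique (smulP f g n) (H n)).
Qed.

Lemma smul_J a b (f g : series R) : Jf a f -> Jf b g -> Jf (a + b) (smul f g).
Proof.
move=> Hf Hg n; apply: (lim_closed (smulP f g n)); exists 0%N => N _.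
apply: mpow_sum => i; apply: (mpow_le _ (mpowM (Hf i) (Diter_J i Hg n))); lia.
Qed.

Lemma smul_M a b (f g : series R) : Mf a f -> Mf b g -> Mf (a + b) (smul f g).
Proof.
move=> Hf Hg n; apply: (lim_closed (smulP f g n)); exists 0%N => N _.
by apply: mpow_sum => i; apply: mpowM; [apply: Hf | apply: Diter_M].
Qed.

Lemma smul_addl (f f' g : series R) : smul (sadd f f') g = sadd (smul f g) (smul f' g).
Proof.
apply: smul_ext => n.
have := lim_add (smulP f g n) (smulP f' g n).
by rewrite /sadd /ssub; move=> H; apply: (lim_ev H); exists 0%N => N _; rewrite -big_split; apply: eq_bigr => i _; rewrite mulrDl.
Qed.

Lemma smul_subl (f f' g : series R) : smul (ssub f f') g = ssub (smul f g) (smul f' g).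
Proof.
apply: smul_ext => n.
have := lim_sub (smulP f g n) (smulP f' g n).
by rewrite /sadd /ssub; move=> H; apply: (lim_ev H); exists 0%N => N _; rewrite -sumrB; apply: eq_bigr => i _; rewrite mulrBl.
Qed.

Lemma smul_addr (f g g' : series R) : smul f (sadd g g') = sadd (smul f g) (smul f g').
Proof.
apply: smul_ext => n.
have := lim_add (smulP f g n) (smulP f g' n).
by rewrite /sadd /ssub; move=> H; apply: (lim_ev H); exists 0%N => N _; rewrite -big_split; apply: eq_bigr => i _; rewrite Diter_add mulrDr.
Qed.

Lemma smul_subr (f g g' : series R) : smul f (ssub g g') = ssub (smul f g) (smul f g').
Proof.
apply: smul_ext => n.
have := lim_sub (smulP f g n) (smulP f g' n).
by rewrite /sadd /ssub; move=> H; apply: (lim_ev H); exists 0%N => N _; rewrite -sumrB; apply: eq_bigr => i _; rewrite Diter_sub mulrBr.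
Qed.

Definition cst (c : R) : series R := fun n => if n == 0%N then c else 0.

Lemma smul_cst c (g : series R) : smul (cst c) g = fun n => c * g n.
Proof.
apply: smul_ext => n; apply: (lim_ev (lim_const _)); exists 1%N => [[|N]] // _.
rewrite big_ord_recl /= big1 ?addr0 // => i _.
by rewrite /cst /= mul0r.
Qed.

Lemma smul_scal c (f g : series R) : smul (fun n => c * f n) g = fun n => c * smul f g n.
Proof.
apply: smul_ext => n; have := lim_mull c (smulP f g n).
by rewrite /sadd /ssub; move=> H; apply: (lim_ev H); exists 0%N => N _; rewrite mulr_sumr; apply: eq_bigr => i _; rewrite mulrA.
Qed.

Definition mon (s : nat) : series R := fun n => if n == s then 1 else 0.

Lemma Dop_mon s : Dop (mon s) = mon s.+1.
Proof.
apply: functional_extensionality => n; rewrite /Dop /mon.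
have -> : delta (if n == s then 1 else 0) = 0 by case: (n == s); rewrite ?delta1 ?delta0.
rewrite addr0; case: n => [|n] //.
by rewrite eqSS; case: (n == s); rewrite ?rmorph1 ?rmorph0.
Qed.

Lemma Diter_mon i s : Diter i (mon s) = mon (i + s).
Proof. by elim: i => [|i IH] //=; rewrite /Diter /= -/(Diter i _) IH Dop_mon. Qed.

Lemma sum_single (F : nat -> R) (k N : nat) : (k < N)%N ->
  \sum_(i < N) (F i * (if k == i then 1 else 0)) = F k.
Proof.
move=> Hk; rewrite (bigD1 (Ordinal Hk)) //= eqxx mulr1 big1 ?addr0 // => i Hi.
have -> : (k == i) = false.
  by apply/negbTE; apply: contra Hi => /eqP Hki; apply/eqP/val_inj; rewrite /= Hki.
by rewrite mulr0.
Qed.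

Lemma smul_mon (f : series R) s : smul f (mon s) = fun n => if (s <= n)%N then f (n - s)%N else 0.
Proof.
apply: smul_ext => n; apply: (lim_ev (lim_const _)); exists n.+1 => N HN.
rewrite /=; case: leqP => Hsn.
- rewrite -(sum_single f (k := (n - s)%N) (N := N)); last by lia.
  apply: eq_bigr => i _; rewrite Diter_mon /mon.
  congr (_ * _); case: eqP => [H|H]; first by rewrite ifT //; apply/eqP; lia.
  by rewrite ifF //; apply/eqP; lia.
- rewrite big1 // => i _; rewrite Diter_mon /mon.
  case: eqP => [H|_]; last by rewrite mulr0.
  lia.
Qed.

Lemma smul_one_r (f : series R) : smul f (one_series R) = f.
Proof.
have -> : one_series R = mon 0 by [].
rewrite smul_mon; apply: functional_extensionality => n.
by rewrite leq0n subn0.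
Qed.

Lemma smul_one_l (g : series R) : smul (one_series R) g = g.
Proof.
have -> : one_series R = cst 1 by [].
by rewrite smul_cst; apply: functional_extensionality => n; rewrite mul1r.
Qed.

Lemma P_split (g h : series R) n N :
  \sum_(i < N.+1) Dop g i * Diter i h n =
  \sum_(i < N) (sigma (g i) * Diter i.+1 h n + delta (g i) * Diter i h n)
  + delta (g N) * Diter N h n.
Proof.
rewrite /Dop; under eq_bigr => i _ do rewrite mulrDl.
rewrite big_split /= big_ord_recl /= mul0r add0r big_ord_recr /=.
by rewrite big_split /= addrA.
Qed.

Lemma Dmul (g h : series R) : smul (Dop g) h = Dop (smul g h).
Proof.
apply: smul_ext => n; apply: lim_unshift.
have H1 : madic_lim (fun N => \sum_(i < N) sigma (g i) *
               (if n is n'.+1 then sigma (Diter i h n') else 0))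
              (if n is n'.+1 then sigma (smul g h n') else 0).
    case: n => [|n'].
    - apply: (lim_ev (lim_const 0)); exists 0%N => N _.
      by rewrite big1 // => i _; rewrite mulr0.
    - have := lim_map (g := sigma) (fun x y => rmorphB sigma x y) (@mpow_sigma) (smulP g h n').
      move=> H; apply: (lim_ev H); exists 0%N => N _.
      by rewrite rmorph_sum; apply: eq_bigr => i _; rewrite rmorphM.
pose Q N := \sum_(i < N) (sigma (g i) * Diter i.+1 h n + delta (g i) * Diter i h n).
have HQ : madic_lim Q (Dop (smul g h) n).
  have H2 := lim_map (g := delta) deltaB (@mpow_deltaW) (smulP g h n).
  apply: (lim_ev (lim_add H1 H2)); exists 0%N => N _.
  rewrite /Q delta_sum -big_split; apply: eq_bigr => i _ /=.
  rewrite deltaM /Diter /= /Dop -/(Diter i h) mulrDr.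
  by rewrite -[LHS]addrA [X in _ = _ + X]addrC.
apply: (lim_vanish HQ) => k; exists (k + n)%N => N HN.
rewrite P_split /Q addrC addKr.
by apply: mpow_mull; apply: (mpow_le _ (Diter_J N (Jf0 h) n)); lia.
Qed.

Lemma Diter_mul i (g h : series R) : smul (Diter i g) h = Diter i (smul g h).
Proof.
elim: i => [|i IH] //.
by rewrite /Diter /= -!/(Diter i _) Dmul IH.
Qed.

Lemma smul_zero_l (h : series R) : smul (fun _ => 0) h = fun _ => 0.
Proof.
apply: smul_ext => n; apply: (lim_ev (lim_const 0)); exists 0%N => N _.
by rewrite big1 // => i _; rewrite mul0r.
Qed.

Lemma smul_fin (f g h : series R) N :
  smul (fun n => \sum_(i < N) f i * Diter i g n) h =
  fun n => \sum_(i < N) f i * Diter i (smul g h) n.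
Proof.
elim: N => [|N IH].
- have -> : (fun n => \sum_(i < 0) f i * Diter i g n) = fun _ => 0.
    by apply: functional_extensionality => n; rewrite big_ord0.
  by rewrite smul_zero_l; apply: functional_extensionality => n; rewrite big_ord0.
- have -> : (fun n => \sum_(i < N.+1) f i * Diter i g n) =
     sadd (fun n => \sum_(i < N) f i * Diter i g n) (fun n => f N * Diter N g n).
    by apply: functional_extensionality => n; rewrite big_ord_recr.
  rewrite smul_addl IH smul_scal Diter_mul.
  by apply: functional_extensionality => n; rewrite big_ord_recr.
Qed.

Lemma smulA (f g h : series R) : smul (smul f g) h = smul f (smul g h).
Proof.
apply: functional_extensionality => n.
apply/eqP; rewrite -subr_eq0; apply/eqP; apply: Hsep => k.
pose N := (k + n)%N.
pose G := fun n => \sum_(i < N) f i * Diter i g n.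
pose S := \sum_(i < N) f i * Diter i (smul g h) n.
have HA : mpow (N - n) (smul (smul f g) h n - S).
  have HJ : Jf N (ssub (smul f g) G).
    move=> m; rewrite /ssub /G.
    apply: (psum_tail (a := fun i => f i * Diter i g m) (smulP f g m)) => t Ht.
    by apply: (mpow_le _ (term_bound f g m t)); lia.
  have := smul_J HJ (Jf0 h) n; rewrite smul_subl /ssub /G smul_fin addn0.
  by [].
have HB : mpow (N - n) (smul f (smul g h) n - S).
  apply: (psum_tail (a := fun i => f i * Diter i (smul g h) n) (smulP f (smul g h) n)) => t Ht.
  by apply: (mpow_le _ (term_bound f _ n t)); lia.
have -> : smul (smul f g) h n - smul f (smul g h) n =
          (smul (smul f g) h n - S) - (smul f (smul g h) n - S).
  by rewrite opprB addrA subrK.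
by apply: (mpow_le _ (mpow_sub HA HB)); lia.
Qed.

Lemma fixpt (w : nat -> nat -> nat) (T : series R -> series R) :
  (forall n, w 0%N n = 0%N) -> (forall k n, (w k n <= w k.+1 n)%N) ->
  (forall k n, (k - n <= w k n)%N) ->
  (forall k (z z' : series R), (forall n, mpow (w k n) (z n - z' n)) ->
      forall n, mpow (w k.+1 n) (T z n - T z' n)) ->
  exists z, T z = z.
Proof.
move=> w0 wS wlow HT.
pose zs k := iter k T (fun _ => 0).
have H1 : forall k n, mpow (w k n) (zs k.+1 n - zs k n).
  elim=> [|k IH] n; first by rewrite w0; apply: mpow0.
  by apply: HT.
have mono : forall k j n, (k <= j)%N -> (w k n <= w j n)%N.
  move=> k j n; elim: j => [|j IH]; first by rewrite leqn0 => /eqP ->.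
  rewrite leq_eqVlt => /orP [/eqP -> //|Hk].
  by apply: leq_trans (IH Hk) (wS j n).
have H2 : forall k d n, mpow (w k n) (zs (k + d)%N n - zs k n).
  move=> k d n; elim: d => [|d IH]; first by rewrite addn0 subrr; apply: mpow_0.
  have -> : zs (k + d.+1)%N n - zs k n =
            (zs (k + d).+1 n - zs (k + d)%N n) + (zs (k + d)%N n - zs k n).
    by rewrite addnS subrKA.
  apply: mpow_add => //; apply: (mpow_le _ (H1 _ n)); apply: mono; exact: leq_addr.
have Hc : forall n, exists l, madic_lim (fun k => zs k n) l.
  move=> n; apply: Hcomp => K; exists (K + n)%N => i j Hi Hj.
  have -> : zs i n - zs j n = (zs i n - zs (K + n)%N n) - (zs j n - zs (K + n)%N n).
    by rewrite opprB subrKA.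
  have E : forall i, (K + n <= i)%N -> mpow K (zs i n - zs (K + n)%N n).
    move=> i' Hi'; rewrite -(subnKC Hi').
    apply: (mpow_le _ (H2 _ _ n)); apply: leq_trans (wlow _ n); lia.
  by apply: mpow_sub; apply: E.
pose z := fun n => proj1_sig (constructive_indefinite_description _ (Hc n)).
have Hzl : forall n, madic_lim (fun k => zs k n) (z n).
  by move=> n; exact: (proj2_sig (constructive_indefinite_description _ (Hc n))).
have Hz : forall k n, mpow (w k n) (z n - zs k n).
  move=> k n; apply: (lim_closed (lim_sub (Hzl n) (lim_const (zs k n)))).
  exists k => j Hj; rewrite -(subnKC Hj); exact: H2.
exists z; apply: functional_extensionality => n.
apply/eqP; rewrite -subr_eq0; apply/eqP; apply: Hsep => K.
have -> : T z n - z n = (T z n - zs (K + n).+1 n) - (z n - zs (K + n).+1 n).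
  by rewrite opprB subrKA.
apply: mpow_sub.
- apply: (mpow_le _ (HT _ _ _ (Hz (K + n)%N) n)); apply: leq_trans (wlow _ n); lia.
- apply: (mpow_le _ (Hz _ n)); apply: leq_trans (wlow _ n); lia.
Qed.

Definition ytail (u : series R) : series R := fun n => if n == 0%N then 0 else u n.

Lemma ytail_J u : Jf 1 (ytail u).
Proof. by move=> [|n]; [apply: mpow_0 | apply: mpow0]. Qed.

Lemma u_split u : u = sadd (cst (u 0%N)) (ytail u).
Proof.
by apply: functional_extensionality => [[|n]]; rewrite /sadd /cst /ytail /= ?addr0 ?add0r.
Qed.

Lemma smul_split (u g : series R) : smul u g = sadd (fun n => u 0%N * g n) (smul (ytail u) g).
Proof. by rewrite {1}(u_split u) smul_addl smul_cst. Qed.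

Lemma smul_coef0 (f g : series R) : in_m (smul f g 0%N - f 0%N * g 0%N).
Proof.
rewrite smul_split /sadd addrC addKr.
by apply/mpow1; have := smul_J (ytail_J f) (Jf0 g) 0%N.
Qed.

Lemma rinv_ex (u : series R) : u 0%N \is a GRing.unit -> exists g, smul u g = one_series R.
Proof.
move=> Hu; pose c := (u 0%N)^-1; pose y := ytail u.
pose T := fun g : series R => fun n => c * (one_series R n - smul y g n).
have [g Hg] : exists g, T g = g.
  apply: (fixpt (w := fun k n => (k - n)%N)) => //.
  - by move=> k n; lia.
  - move=> k z z' Hzz' n; rewrite /T -mulrBr; apply: mpow_mull.
    have -> : one_series R n - smul y z n - (one_series R n - smul y z' n) =
              - (smul y z n - smul y z' n).
      by rewrite !opprB addrC subrKA.
    apply: mpow_opp; have := smul_J (ytail_J u) (Hzz' : Jf k (ssub z z')) n.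
    by rewrite smul_subr.
exists g; rewrite smul_split; apply: functional_extensionality => n.
rewrite /sadd -{1}Hg /T mulrA mulrV // mul1r.
by rewrite subrK.
Qed.

Definition sunit (u : series R) := exists v, smul u v = one_series R /\ smul v u = one_series R.

Lemma sunit_coef0 u : sunit u -> u 0%N \is a GRing.unit.
Proof.
move=> [v [Huv _]]; have := smul_coef0 u v; rewrite Huv /one_series /= => H.
have Hp : (u 0%N * v 0%N) \is a GRing.unit.
  have -> : u 0%N * v 0%N = 1 + - (1 - u 0%N * v 0%N) by rewrite opprB addrC subrK.
  by apply: unit_addm; [exact: unitr1 | apply: inmN].
apply: notm_unit => Hm; apply: (unit_notm Hp); exact: inmMr.
Qed.

Lemma unit_sunit (u : series R) : u 0%N \is a GRing.unit -> sunit u.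
Proof.
move=> Hu; have [g Hg] := rinv_ex Hu.
have Hg0 : g 0%N \is a GRing.unit.
  have := smul_coef0 u g; rewrite Hg /one_series /= => H.
  have Hp : (u 0%N * g 0%N) \is a GRing.unit.
    have -> : u 0%N * g 0%N = 1 + - (1 - u 0%N * g 0%N) by rewrite opprB addrC subrK.
    by apply: unit_addm; [exact: unitr1 | apply: inmN].
  by rewrite unitrMr in Hp.
have [h Hh] := rinv_ex Hg0.
have Euh : u = h by rewrite -[LHS]smul_one_r -Hh -smulA Hg smul_one_l.
by exists g; split => //; rewrite Euh -Hh -Euh.
Qed.

Lemma negB2 (a b b' : R) : -(a + b) - -(a + b') = -(b - b').
Proof. by rewrite opprK opprD addrACA addNr add0r opprB addrC. Qed.

Lemma sunit_eq u : series_unit sigma delta u <-> sunit u.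
Proof.
split.
- by move=> [v [H1 H2]]; exists v; split; symmetry; apply/smul_eq.
- by move=> [v [H1 H2]]; exists v; split; apply/smul_eq; symmetry.
Qed.

Lemma existence (f : series R) : finite_red_ord f ->
  exists (eps F : series R),
      series_unit sigma delta eps /\ distinguished F /\
      series_mul_eq sigma delta eps F f.
Proof.
move=> Hf; case: (ex_minnP Hf) => s Hs Hmin.
pose U : series R := fun n => if (n < s)%N then f n else 0.
pose V : series R := fun n => f (n + s)%N.
have HfUV : f = sadd U (smul V (mon s)).
  apply: functional_extensionality => n; rewrite smul_mon /sadd /U /V.
  by case: ltnP => Hn; rewrite ?addr0 // add0r subnK.
have HU : Mf 1 U.
  move=> n; apply/mpow1; rewrite /U; case: ltnP => Hn; last exact: inm0.
  by apply/negP => H; have := Hmin _ H; lia.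
have [V' [HVV' HV'V]] : sunit V by apply: unit_sunit.
pose h := smul V' U.
have Hh : Mf 1 h by apply: (smul_M (Mf0 V') HU).
pose T := fun z : series R => fun n => - (h (n + s)%N + smul z h (n + s)%N).
have [z Hz] : exists z, T z = z.
  apply: (fixpt (w := fun k n => k)) => //.
  - by move=> k n; lia.
  - move=> k z z' Hzz' n; rewrite /T negB2; apply: mpow_opp.
    have := smul_M (Hzz' : Mf k (ssub z z')) Hh (n + s)%N.
    by rewrite smul_subl addn1.
have Hz1 : Mf 1 z.
  move=> n; rewrite -Hz /T; apply: mpow_opp; apply: mpow_add; first by apply: Hh.
  exact: (smul_M (Mf0 z) Hh).
pose w := sadd (one_series R) z.
have [w' [Hww' Hw'w]] : sunit w.
  apply: unit_sunit; rewrite /w /sadd /one_series /=.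
  by apply: unit_addm; [exact: unitr1 | apply/mpow1; apply: Hz1].
pose F := smul w (sadd (mon s) h).
have HF : forall n, F n = mon s n + h n + smul z (mon s) n + smul z h n.
  move=> n; rewrite /F /w smul_addl smul_one_l smul_addr /sadd.
  by rewrite ?addrA.
exists (smul V w'), F; split; [|split].
- apply/sunit_eq; exists (smul w V'); split.
  + by rewrite smulA -(smulA w') Hw'w smul_one_l HVV'.
  + by rewrite smulA -(smulA V') HV'V smul_one_l Hww'.
- exists s; split; [|split].
  + rewrite HF smul_mon leqnn subnn -{1}Hz /T add0n /mon eqxx.
    by rewrite addrKA subrK.
  + move=> i Hi; rewrite HF smul_mon leqNgt Hi /= addr0 /mon.
    have -> : (i == s) = false by apply/negbTE; rewrite neq_ltn Hi.
    rewrite add0r; apply/mpow1; apply: mpow_add; first by apply: Hh.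
    exact: (smul_M (Mf0 z) Hh).
  + move=> i Hi; rewrite HF smul_mon (ltnW Hi) -{1}Hz /T subnK; last exact: ltnW.
    rewrite /mon; have -> : (i == s) = false by apply/negbTE; rewrite neq_ltn Hi orbT.
    by rewrite add0r opprD addrA subrr add0r addNr.
- apply/smul_eq; rewrite /F smulA -(smulA w') Hw'w smul_one_l.
  rewrite smul_addr -smulA HVV' smul_one_l HfUV.
  by apply: functional_extensionality => n; rewrite /sadd addrC.
Qed.

Lemma uniq_core (u F F' : series R) : u 0%N \is a GRing.unit ->
  distinguished F -> distinguished F' -> smul u F = F' ->
  u = one_series R /\ F = F'.
Proof.
move=> Hu [s [Fs [Flt Fgt]]] [s' [F's [F'lt F'gt]]] HuF.
pose H := ssub F (mon s).
have HH : Mf 1 H.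
  move=> n; apply/mpow1; rewrite /H /ssub /mon.
  case: (ltngtP n s) => Hn.
  - by rewrite subr0; apply: Flt.
  - by rewrite Fgt // subr0; exact: inm0.
  - by rewrite Hn Fs subrr; exact: inm0.
have EF : F = sadd (mon s) H.
  by apply: functional_extensionality => n; rewrite /sadd /H /ssub addrC subrK.
have HuH : Mf 1 (smul u H) by apply: (smul_M (Mf0 u) HH).
have EF' : forall n, F' n = (if (s <= n)%N then u (n - s)%N else 0) + smul u H n.
  by move=> n; rewrite -HuF {1}EF smul_addr smul_mon.
have Hss : s = s'.
  case: (ltngtP s s') => // Hlt; exfalso.
  - have := EF' s; rewrite leqnn subnn => E.
    apply: (unit_notm Hu).
    have -> : u 0%N = F' s - smul u H s by rewrite E addrK.
    by apply: inmD; [apply: F'lt | apply: inmN; apply/mpow1; apply: HuH].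
  - have := EF' s'; rewrite leqNgt Hlt /= add0r F's => E.
    by apply: one_notm; rewrite E; apply/mpow1; apply: HuH.
subst s'.
pose w := ssub u (one_series R).
have Hw : smul w F = ssub F' F by rewrite smul_subl smul_one_l HuF.
have Hwk : forall k, Mf k w.
  elim=> [|k IH]; first exact: Mf0.
  move=> i.
  have := f_equal (fun g => g (i + s)%N) Hw; rewrite /= {1}EF smul_addr /sadd smul_mon.
  rewrite leq_addl addnK /ssub.
  have -> : F' (i + s)%N - F (i + s)%N = 0.
    case: i => [|i]; first by rewrite add0n Fs F's subrr.
    by rewrite Fgt ?F'gt ?subrr // addSn ltnS leq_addl.
  move/eqP; rewrite addr_eq0 => /eqP ->; apply: mpow_opp.
  by have := smul_M IH HH (i + s)%N; rewrite addn1.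
have Hu1 : u = one_series R.
  apply: functional_extensionality => n; apply/eqP; rewrite -subr_eq0; apply/eqP.
  by apply: Hsep => k; apply: Hwk.
by split => //; rewrite -HuF Hu1 smul_one_l.
Qed.

Lemma uniqueness (f : series R) (eps F eps' F' : series R) :
      series_unit sigma delta eps -> distinguished F ->
      series_mul_eq sigma delta eps F f ->
      series_unit sigma delta eps' -> distinguished F' ->
      series_mul_eq sigma delta eps' F' f ->
      eps = eps' /\ F = F'.
Proof.
move=> /sunit_eq [nu [H1 H2]] HF /smul_eq Hf /sunit_eq [nu' [H1' H2']] HF' /smul_eq Hf'.
pose u := smul nu' eps.
have HuF : smul u F = F' by rewrite /u smulA -Hf Hf' -smulA H2' smul_one_l.
have Hu : sunit u.
  exists (smul nu eps'); split.
  - by rewrite /u smulA -(smulA eps) H1 smul_one_l H2'.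
  - by rewrite /u smulA -(smulA eps') H1' smul_one_l H2.
have [Hu1 HFF] := uniq_core (sunit_coef0 Hu) HF HF' HuF.
split => //.
by rewrite -[RHS]smul_one_r -Hu1 /u -smulA H1' smul_one_l.
Qed.

End Main.


Theorem mainTheorem6 (R : unitRingType)
  (sigma : {rmorphism R -> R}) (delta : R -> R)
  (Hloc : local_ring R)
  (Hsep : madic_separated R)
  (Hcomp : madic_complete R)
  (Hsig_bij : bijective sigma)
  (Hsig_m : (forall x, in_m x -> in_m (sigma x)) /\
            (forall y, in_m y -> exists x, in_m x /\ sigma x = y))
  (Hdelta : sigma_derivation sigma delta)
  (Hdelta_R : forall x, in_m (delta x))
  (Hdelta_m : forall x, in_m x -> mpow 2 (delta x))
  (f : series R) (Hf : finite_red_ord f) :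
  (exists (eps F : series R),
      series_unit sigma delta eps /\ distinguished F /\
      series_mul_eq sigma delta eps F f) /\
  (forall (eps F eps' F' : series R),
      series_unit sigma delta eps -> distinguished F ->
      series_mul_eq sigma delta eps F f ->
      series_unit sigma delta eps' -> distinguished F' ->
      series_mul_eq sigma delta eps' F' f ->
      eps = eps' /\ F = F').
Proof.
split.
- exact: (existence Hloc Hsep Hcomp Hsig_m.1 Hdelta Hdelta_R Hdelta_m Hf).
- move=> eps F eps' F'.
  exact: (uniqueness Hloc Hsep Hcomp Hsig_m.1 Hdelta Hdelta_R Hdelta_m).
Qed.
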